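(* Let $\Gamma=(V,E,w)$ be a finite simple weighted digraph with vertex set $V=\{1,\dots,n\}$ and weights $0\le w_{ij}\le 1$ (with $w_{ij}=0$ iff $(i,j)\notin E$), and let $L=D-A$ be its graph Laplacian. Then $\Gamma$ is a complete dominance graph if and only if $\sigma(L)=\{d^{+}(1),d^{+}(2),\dots,d^{+}(n)\}=\{n-1,n-2,\dots,0\}$ (as multisets).
   Context: $d^{+}(i)=\sum_{j\in V} w_{ij}$, $D=\mathrm{diag}(d^{+}(1),\dots,d^{+}(n))$, $A=[w_{ij}]$, $L=D-A$; $\sigma(L)$ is the multiset of eigenvalues of $L$. A tournament is a digraph such that for each pair of distinct vertices $i,j$ exactly one of $(i,j),(j,i)$ is an edge. A complete dominance graph is an acyclic tournament in which every edge has weight $1$. *)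

(* Defs.v *)
From HB Require Import structures.
From mathcomp Require Import all_boot all_order all_algebra.
From mathcomp Require Import reals.
Set Implicit Arguments. Unset Strict Implicit. Unset Printing Implicit Defensive.
Import Order.TTheory GRing.Theory Num.Theory.
Local Open Scope ring_scope.

(* A weighted digraph on V = 'I_n is given by its weight matrix w = [w_ij]. *)
Section Digraph.
Variables (R : realType) (n : nat).

Definition outdeg (w : 'M[R]_n) (i : 'I_n) : R := \sum_(j < n) w i j.

Definition degmx (w : 'M[R]_n) : 'M[R]_n := diag_mx (\row_i outdeg w i).

Definition laplacian (w : 'M[R]_n) : 'M[R]_n := degmx w - w.

Definition edge (w : 'M[R]_n) : rel 'I_n := fun i j => w i j != 0.

Definition is_tournament (w : 'M[R]_n) : Prop :=
  forall i j : 'I_n, i != j -> (edge w i j) (+) (edge w j i).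

Definition acyclic (w : 'M[R]_n) : Prop :=
  forall i j : 'I_n, edge w i j -> ~~ connect (edge w) j i.

Definition complete_dominance (w : 'M[R]_n) : Prop :=
  [/\ is_tournament w, acyclic w & forall i j, edge w i j -> w i j = 1].

End Digraph.

(* Main.v *)
Require Import Defs.
From HB Require Import structures.
From mathcomp Require Import all_boot all_order all_algebra.
From mathcomp Require Import reals.
From mathcomp Require Import all_fingroup spectral mxred.
From mathcomp.real_closed Require Import complex.
Import Order.TTheory GRing.Theory Num.Theory.
Local Open Scope ring_scope.
Lemma trig_mulmx (F : comNzRingType) n (A B : 'M[F]_n) :
  is_trig_mx A -> is_trig_mx B ->
  is_trig_mx (A *m B) /\ forall i, (A *m B) i i = A i i * B i i.
Proof.
move=> /is_trig_mxP hA /is_trig_mxP hB; split.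
  apply/is_trig_mxP => i j lij; rewrite mxE big1 // => k _.
  case: (ltnP i k) => [lik|lki]; first by rewrite hA ?mul0r.
  by rewrite hB ?mulr0 // (leq_ltn_trans lki lij).
move=> i; rewrite mxE (bigD1 i) //= big1 ?addr0 // => k nki.
case: (ltngtP i k) => [lik|lki|eik]; first by rewrite hA ?mul0r.
  by rewrite hB ?mulr0.
by move: nki; rewrite (val_inj eik) eqxx.
Qed.

Lemma char_poly_conj (F : fieldType) n (P A : 'M[F]_n) : P \in unitmx ->
  char_poly (P *m A *m invmx P) = char_poly A.
Proof.
move=> Pu; rewrite /char_poly.
pose Pp := map_mx polyC P; pose Pi := map_mx polyC (invmx P).
have PPi : Pp *m Pi = 1%:M by rewrite -map_mxM mulmxV // map_mx1.
have -> : char_poly_mx (P *m A *m invmx P) = Pp *m char_poly_mx A *m Pi.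
  rewrite /char_poly_mx mulmxBr mulmxBl !map_mxM.
  by rewrite mul_mx_scalar -scalemxAl -mul_mx_scalar PPi mul1mx.
by rewrite !det_mulmx mulrAC -det_mulmx PPi det1 mul1r.
Qed.
Arguments trig_mulmx {F n A B}.
Lemma prod_ord_seq (F : comNzRingType) n (a : 'I_n -> F) :
  \prod_(i < n) ('X - (a i)%:P) = \prod_(x <- [seq a i | i <- enum 'I_n]) ('X - x%:P).
Proof. by rewrite big_map big_enum. Qed.

Lemma sum_ord_seq (F : comNzRingType) n (a : 'I_n -> F) k :
  \sum_(i < n) a i ^+ k = \sum_(x <- [seq a i | i <- enum 'I_n]) x ^+ k.
Proof. by rewrite big_map big_enum. Qed.

Lemma trace_pows (C : numClosedFieldType) n (A : 'M[C]_n) (a : 'I_n -> C) :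
  char_poly A = \prod_(i < n) ('X - (a i)%:P) ->
  \tr (A *m A) = \sum_i a i ^+ 2 /\ \tr (A *m A *m A) = \sum_i a i ^+ 3.
Proof.
case: n A a => [|n] A a hc.
  by rewrite /mxtrace !big_ord0.
have [P Pu Ptrig] := @Schur C n.+1 A isT.
have Pun := unitarymx_unit Pu.
move: Ptrig; rewrite /similar_to conjumx // => Tt.
set T := P *m A *m invmx P in Tt.
have hT : char_poly T = \prod_(i < n.+1) ('X - (T i i)%:P).
  exact: char_poly_trig.
rewrite char_poly_conj // hc !prod_ord_seq in hT.
have pe := prod_XsubC_eq hT.
have [T2t T2d] := trig_mulmx Tt Tt.
have [T3t T3d] := trig_mulmx T2t Tt.
have tconj : forall B, \tr (P *m B *m invmx P) = \tr B.
  by move=> B; rewrite mxtrace_mulC mulmxA mulVmx // mul1mx.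
have eT2 : T *m T = P *m (A *m A) *m invmx P.
  by rewrite /T !mulmxA mulmxKV.
have eT3 : T *m T *m T = P *m (A *m A *m A) *m invmx P.
  by rewrite eT2 /T !mulmxA mulmxKV.
have e2 : \sum_(i < n.+1) T i i ^+ 2 = \sum_i a i ^+ 2.
  by rewrite (@sum_ord_seq _ _ (fun i => T i i)) (@sum_ord_seq _ _ a) (perm_big _ pe).
have e3 : \sum_(i < n.+1) T i i ^+ 3 = \sum_i a i ^+ 3.
  by rewrite (@sum_ord_seq _ _ (fun i => T i i)) (@sum_ord_seq _ _ a) (perm_big _ pe).
split.
  rewrite -tconj -eT2 -e2 /mxtrace.
  by apply: eq_bigr => i _; rewrite T2d expr2.
rewrite -tconj -eT3 -e3 /mxtrace.
apply: eq_bigr => i _; by rewrite T3d T2d !exprS expr0 mulr1 mulrA.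
Qed.
Lemma trace_pows_real (R : realType) n (L : 'M[R]_n) (d : 'I_n -> R) :
  char_poly L = \prod_(i < n) ('X - (d i)%:P) ->
  \tr (L *m L) = \sum_i d i ^+ 2 /\ \tr (L *m L *m L) = \sum_i d i ^+ 3.
Proof.
move=> hc.
have hA : char_poly (map_mx (real_complex R) L) = \prod_(i < n) ('X - (real_complex R (d i))%:P).
  rewrite -map_char_poly hc rmorph_prod; apply: eq_bigr => i _.
  exact: map_polyXsubC.
have [h2 h3] := trace_pows _ _ _ _ hA.
have trm : forall B : 'M[R]_n, \tr (map_mx (real_complex R) B) = real_complex R (\tr B).
  by move=> B; rewrite /mxtrace rmorph_sum; apply: eq_bigr => i _; rewrite mxE.
split; apply: (@fmorph_inj _ _ (real_complex R)).
  apply: (etrans (esym (trm (L *m L)))).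
  by rewrite map_mxM h2 rmorph_sum; apply: eq_bigr => i _; rewrite rmorphXn.
apply: (etrans (esym (trm (L *m L *m L)))).
by rewrite !map_mxM h3 rmorph_sum; apply: eq_bigr => i _; rewrite rmorphXn.
Qed.
From mathcomp.algebra_tactics Require Import ring lra.

Lemma lapE (R : realType) n (w : 'M[R]_n) i j :
  laplacian w i j = (i == j)%:R * outdeg w i - w i j.
Proof. by rewrite /laplacian /degmx !mxE mulr_natl. Qed.

Lemma sum_delta (R : realType) n (i : 'I_n) (c : R) :
  \sum_(j < n) (i == j)%:R * c = c.
Proof.
rewrite (bigD1 i) //= eqxx mul1r big1 ?addr0 // => j nji.
by rewrite eq_sym (negbTE nji) mul0r.
Qed.

Lemma sum_nat_tri (R : realType) n :
  2 * \sum_(k < n) (k%:R : R) = n%:R * (n%:R - 1).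
Proof.
elim: n => [|n IH]; first by rewrite big_ord0 mulr0 mul0r.
rewrite big_ord_recr /= mulrDr IH -addn1 natrD.
ring.
Qed.
Lemma stepA (R : realType) n (w : 'M[R]_n)
  (Hsimple : forall i : 'I_n, w i i = 0)
  (Hw : forall i j : 'I_n, 0 <= w i j <= 1) :
  \tr (laplacian w *m laplacian w) = \sum_i outdeg w i ^+ 2 ->
  forall i j, w i j * w j i = 0.
Proof.
move=> htr.
have pt : forall i j, laplacian w i j * laplacian w j i =
    (i == j)%:R * outdeg w i ^+ 2 + w i j * w j i.
  move=> i j; rewrite !lapE; case: (eqVneq i j) => [<-|nij].
    by rewrite /= mulr1n Hsimple !mul1r subr0 mulr0 addr0 expr2.
  rewrite /= mulr0n !mul0r; ring.
have : \sum_i \sum_j w i j * w j i = 0.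
  move: htr; rewrite /mxtrace.
  under eq_bigr do rewrite mxE.
  under eq_bigr do under eq_bigr do rewrite pt.
  under eq_bigr do rewrite big_split /= sum_delta.
  rewrite big_split /= => h; apply: (@addrI _ (\sum_(i < n) outdeg w i ^+ 2)).
  by rewrite addr0.
have ge0 : forall i j, 0 <= w i j * w j i.
  by move=> i j; case/andP: (Hw i j) => ? _; case/andP: (Hw j i) => ? _; apply: mulr_ge0.
move/psumr_eq0P => h i j.
have hi := h (fun k _ => sumr_ge0 _ (fun l _ => ge0 k l)) i isT.
by move/psumr_eq0P: hi; apply => // k _; apply: ge0.
Qed.
Lemma stepB (R : realType) n (w : 'M[R]_n)
  (Hsimple : forall i : 'I_n, w i i = 0)
  (Hw : forall i j : 'I_n, 0 <= w i j <= 1)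
  (H2 : forall i j, w i j * w j i = 0) :
  \tr (laplacian w *m laplacian w *m laplacian w) = \sum_i outdeg w i ^+ 3 ->
  forall i j k, w i j * w j k * w k i = 0.
Proof.
move=> htr.
have pt : forall i j k, laplacian w i j * laplacian w j k * laplacian w k i =
    (i == j)%:R * ((i == k)%:R * outdeg w i ^+ 3) - w i j * w j k * w k i.
  move=> i j k; rewrite !lapE.
  case: (eqVneq i j) => [<-|nij]; case: (eqVneq i k) => [<-|nik] /=.
  all: rewrite ?eqxx /= ?mulr1n ?mulr0n ?Hsimple ?mul1r ?mul0r ?subr0 ?sub0r.
  all: try (case: (eqVneq j k) => [<-|njk] /=); rewrite ?mulr1n ?mulr0n ?Hsimple ?mul1r ?mul0r ?subr0 ?sub0r.
  - by rewrite !exprS expr0 mulr1 mulrA.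
  - by rewrite !mulrN !mulNr opprK -mulrA H2 mulr0.
  - by rewrite !mulrN !mulNr opprK -mulrA H2 mulr0.
  - by rewrite eq_sym (negbTE nij) /= mulr0n mul0r sub0r mulr0 oppr0 mulrNN H2 mul0r.
  - by rewrite mulr0 mul0r oppr0 mulrN !mulNr opprK mulrAC H2 mul0r.
  - by rewrite mulrNN mulrN.
have : \sum_i \sum_k \sum_j w i j * w j k * w k i = 0.
  move: htr; rewrite /mxtrace.
  under eq_bigr do rewrite mxE.
  under eq_bigr do under eq_bigr do rewrite mxE mulr_suml.
  under eq_bigr do under eq_bigr do under eq_bigr do rewrite pt.
  under eq_bigr do under eq_bigr do rewrite sumrB sum_delta.
  under eq_bigr do rewrite sumrB sum_delta.
  rewrite sumrB => /eqP; rewrite subr_eq addrC -subr_eq subrr eq_sym => /eqP.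
  done.
have ge0 : forall i j k, 0 <= w i j * w j k * w k i.
  move=> i j k; case/andP: (Hw i j) => ? _; case/andP: (Hw j k) => ? _.
  by case/andP: (Hw k i) => ? _; rewrite !mulr_ge0.
move/psumr_eq0P => h i j k.
have hi := h (fun a _ => sumr_ge0 _ (fun b _ => sumr_ge0 _ (fun c _ => ge0 a c b))) i isT.
move/psumr_eq0P: hi => hi.
have hk := hi (fun b _ => sumr_ge0 _ (fun c _ => ge0 i c b)) k isT.
by move/psumr_eq0P: hk; apply => // c _; apply: ge0.
Qed.
Lemma stepC (R : realType) n (w : 'M[R]_n)
  (Hsimple : forall i : 'I_n, w i i = 0)
  (Hw : forall i j : 'I_n, 0 <= w i j <= 1)
  (H2 : forall i j, w i j * w j i = 0) :
  perm_eq [seq outdeg w i | i <- enum 'I_n] [seq (k%:R : R) | k <- iota 0 n] ->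
  forall i j, i != j -> w i j + w j i = 1.
Proof.
move=> pe.
have hS : \sum_i outdeg w i = \sum_(k < n) (k%:R : R).
  have := perm_big (op := +%R) (x := 0) (P := predT) (F := id) _ pe.
  rewrite !big_map => h; apply: etrans h _.
  have := @big_mkord R 0 +%R n xpredT (fun k => (k%:R : R)).
  by rewrite /index_iota subn0 => <-.
pose g i j := (i != j)%:R - (w i j + w j i).
have gge0 : forall i j, 0 <= g i j.
  move=> i j; rewrite /g; case: (eqVneq i j) => [<-|nij] /=.
    by rewrite Hsimple addr0 subr0.
  have := H2 i j; move/eqP; rewrite mulf_eq0 => /orP[] /eqP ->.
    by rewrite add0r subr_ge0; case/andP: (Hw j i).
  by rewrite addr0 subr_ge0; case/andP: (Hw i j).
have gsum : \sum_i \sum_j g i j = 0.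
  rewrite /g.
  under eq_bigr do rewrite sumrB.
  rewrite sumrB.
  have -> : \sum_(i < n) \sum_(j < n) ((i != j)%:R : R) = n%:R * (n%:R - 1).
    transitivity (\sum_(i < n) (n%:R - 1 : R)); last by rewrite sumr_const card_ord mulr_natl.
    apply: eq_bigr => i _.
    transitivity (\sum_(j < n) (1 - (i == j)%:R * 1 : R)).
      by apply: eq_bigr => j _; case: (i == j); rewrite /= ?mulr1 ?subrr ?subr0.
    by rewrite sumrB sum_delta sumr_const card_ord.
  under eq_bigr do rewrite big_split /=.
  rewrite big_split /= [\sum_(i < n) \sum_(j < n) w j i]exchange_big /=.
  have e : \sum_(i < n) \sum_(j < n) w i j = \sum_(k < n) (k%:R : R) by rewrite -hS.
  rewrite e -sum_nat_tri; ring.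
move=> i j nij.
have h1 := @psumr_eq0P _ _ _ _ (fun a _ => sumr_ge0 _ (fun b _ => gge0 a b)) gsum i isT.
have := @psumr_eq0P _ _ _ _ (fun b _ => gge0 i b) h1 j isT.
rewrite /g nij /= => /eqP; rewrite subr_eq0 => /eqP.
by move=> <-.
Qed.
Lemma converse (R : realType) n (w : 'M[R]_n)
  (Hsimple : forall i : 'I_n, w i i = 0)
  (Hw : forall i j : 'I_n, 0 <= w i j <= 1) :
  char_poly (laplacian w) = \prod_(i < n) ('X - (outdeg w i)%:P) ->
  perm_eq [seq outdeg w i | i <- enum 'I_n] [seq (k%:R : R) | k <- iota 0 n] ->
  complete_dominance w.
Proof.
move=> hc pe.
have [t2 t3] := trace_pows_real _ _ _ _ hc.
have H2 := stepA _ _ _ Hsimple Hw t2.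
have H3 := stepB _ _ _ Hsimple Hw H2 t3.
have HC := stepC _ _ _ Hsimple Hw H2 pe.
have Hval : forall i j, i != j -> (w i j = 0 /\ w j i = 1) \/ (w i j = 1 /\ w j i = 0).
  move=> i j nij; have s1 := HC i j nij.
  have := H2 i j; move/eqP; rewrite mulf_eq0 => /orP[] /eqP h0.
    by left; split => //; move: s1; rewrite h0 add0r.
  by right; split => //; move: s1; rewrite h0 addr0.
have edge_neq : forall i j, edge w i j -> i != j.
  by move=> i j; rewrite /edge; apply: contraNneq => ->; rewrite Hsimple.
have trans : forall i j k, edge w i j -> edge w j k -> edge w i k.
  move=> i j k eij ejk.
  have nik : i != k.
    apply/eqP => eik; move: (H2 i j); rewrite eik; apply/eqP.
    by rewrite mulf_neq0 // -eik.
  have wki : w k i = 0.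
    by move: (H3 i j k)=> /eqP; rewrite !mulf_eq0 (negbTE eij) (negbTE ejk) /= => /eqP.
  by rewrite /edge; have := HC i k nik; rewrite wki addr0 => ->; apply: oner_neq0.
have conn : forall j i, connect (edge w) j i -> j = i \/ edge w j i.
  move=> j i /connectP [p hp ->] {i}.
  elim: p j hp => [|x p IH] j /=; first by left.
  case/andP => ejx /IH [<-|exl]; first by right.
  by right; apply: trans exl.
split.
- move=> i j nij; rewrite /edge.
  by case: (Hval i j nij) => [[-> ->]|[-> ->]]; rewrite eqxx oner_neq0.
- move=> i j eij; apply/negP => /conn [eji|eji].
    by move: eij; rewrite eji /edge Hsimple eqxx.
  by move: (H2 i j) => /eqP; rewrite mulf_eq0 (negbTE eij) (negbTE eji).
- move=> i j eij; case: (Hval i j (edge_neq _ _ eij)) => [[h _]|[h _]] //.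
  by move: eij; rewrite /edge h eqxx.
Qed.
Lemma forward (R : realType) n (w : 'M[R]_n)
  (Hsimple : forall i : 'I_n, w i i = 0)
  (Hw : forall i j : 'I_n, 0 <= w i j <= 1) :
  complete_dominance w ->
  char_poly (laplacian w) = \prod_(i < n) ('X - (outdeg w i)%:P) /\
  perm_eq [seq outdeg w i | i <- enum 'I_n] [seq (k%:R : R) | k <- iota 0 n].
Proof.
case=> T Ac W1.
have w01 : forall i j, w i j = (edge w i j)%:R.
  move=> i j; case e: (edge w i j); first by rewrite W1 ?e.
  by move/negbT: e; rewrite /edge negbK => /eqP.
have edge_neq : forall i j, edge w i j -> i != j.
  by move=> i j; rewrite /edge; apply: contraNneq => ->; rewrite Hsimple.
have dom : forall i j, edge w i j -> outdeg w j < outdeg w i.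
  move=> i j eij.
  have le : forall k, w j k <= w i k.
    move=> k; case ejk: (edge w j k); last first.
      by move/negbT: ejk; rewrite /edge negbK => /eqP ->; case/andP: (Hw i k).
    have nik : i != k.
      apply/eqP => eik; move: (Ac i j eij); rewrite eik.
      by rewrite connect1.
    have eik : edge w i k.
      case: (boolP (edge w k i)) => eki.
        move: (Ac i j eij); rewrite (connect_trans (connect1 ejk) (connect1 eki)).
        done.
      by move: (T i k nik); rewrite (negbTE eki) addbF.
    by rewrite (W1 _ _ eik); case/andP: (Hw j k).
  rewrite -subr_gt0 /outdeg -sumrB (bigD1 j) //=.
  apply: (@lt_le_trans _ _ (w i j - w j j)).
    by rewrite W1 // Hsimple subr0 ltr01.
  by rewrite lerDl sumr_ge0 // => k _; rewrite subr_ge0.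
split.
  rewrite /char_poly /determinant (bigD1 (1%g : {perm 'I_n})) //= odd_perm1 expr0 mul1r.
  rewrite [X in _ + X]big1 ?addr0.
    apply: eq_bigr => i _; by rewrite perm1 !mxE eqxx Hsimple subr0.
  move=> s s1; apply/eqP; rewrite mulf_eq0; apply/orP; right.
  apply/negP => /negP /prodf_neq0 hnz.
  have dle : forall i, s i != i -> outdeg w (s i) < outdeg w i.
    move=> i si; apply: dom; rewrite /edge.
    by have := hnz i isT; rewrite !mxE [i == s i]eq_sym (negbTE si) !mulr0n !sub0r polyCN opprK polyC_eq0.
  have [i0 hi0] : exists i0, s i0 != i0.
    apply/existsP; apply: contraR s1 => /existsPn h; apply/eqP/permP => k.
    by rewrite perm1; apply/eqP; move: (h k); rewrite negbK.
  have ge0 : forall i, 0 <= outdeg w i - outdeg w (s i).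
    move=> i; case: (eqVneq (s i) i) => [->|si]; first by rewrite subrr.
    by rewrite subr_ge0 ltW // dle.
  have e : \sum_i outdeg w (s i) = \sum_i outdeg w i.
    exact: esym (reindex_inj (@perm_inj _ s)).
  have z : \sum_i (outdeg w i - outdeg w (s i)) = 0 by rewrite sumrB e subrr.
  have := @psumr_eq0P _ _ _ _ (fun i _ => ge0 i) z i0 isT.
  by move/eqP; rewrite subr_eq0 => /eqP h; move: (dle i0 hi0); rewrite h ltxx.
pose cnt i := #|[pred k | edge w i k]|.
have dcnt : forall i, outdeg w i = (cnt i)%:R.
  move=> i; rewrite /outdeg.
  transitivity (\sum_(k in [pred k | edge w i k]) (1 : R)).
    rewrite [RHS]big_mkcond; apply: eq_bigr => k _; rewrite w01 inE /=.
    by case: (edge w i k).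
  by rewrite sumr_const.
have cntlt : forall i, (cnt i < n)%N.
  move=> i; have : (cnt i <= #|predC1 i|)%N.
    apply: subset_leq_card; apply/subsetP => k; rewrite !inE => eik.
    by rewrite eq_sym edge_neq.
  rewrite cardC1 card_ord => h; apply: (leq_ltn_trans h).
  by rewrite prednK // (leq_ltn_trans _ (ltn_ord i)).
have inj : injective (outdeg w).
  move=> i j eij; apply/eqP; apply/negPn/negP => nij.
  move: (T i j nij); case: (boolP (edge w i j)) => [e _|_ /= e].
    by move: (dom _ _ e); rewrite eij ltxx.
  by move: (dom _ _ e); rewrite eij ltxx.
have u1 : uniq [seq outdeg w i | i <- enum 'I_n].
  by rewrite (map_inj_uniq inj) enum_uniq.
have u2 : uniq [seq (k%:R : R) | k <- iota 0 n].
  rewrite map_inj_uniq ?iota_uniq // => a b /eqP; rewrite eqr_nat => /eqP.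
  done.
apply: uniq_perm => //.
apply: (uniq_min_size u1 _ _).2.
  move=> x /mapP [i _ ->]; rewrite dcnt; apply: map_f.
  by rewrite mem_iota add0n cntlt.
by rewrite !size_map size_iota -enumT size_enum_ord.
Qed.

Theorem corollary2p7 (R : realType) (n : nat) (w : 'M[R]_n)
  (Hsimple : forall i : 'I_n, w i i = 0)
  (Hw : forall i j : 'I_n, 0 <= w i j <= 1) :
  complete_dominance w <->
  (char_poly (laplacian w) = \prod_(i < n) ('X - (outdeg w i)%:P)
   /\ perm_eq [seq outdeg w i | i <- enum 'I_n] [seq (k%:R : R) | k <- iota 0 n]).
Proof.
split; first exact: forward.
by case=> hc pe; apply: converse.
Qed.
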